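(* Let $\Delta\ge 4$ be an integer and let $c_1,\dots,c_\Delta$ be defined by $c_\Delta=\frac{1}{\Delta}$ and $ic_i+c_{i+1}=1$ for $i=1,\dots,\Delta-1$. Let $\Delta'$ be an integer with $3\le \Delta'<\Delta$ and let $G\in\mathcal{G}_{\Delta'}$. Then $$\alpha(G)\ge \sum_{i=1}^{\Delta'} c_i|V_i(G)|.$$
   Context: All graphs are simple, finite and undirected. For an integer $D\ge 3$, $\mathcal{G}_{D}$ denotes the set of connected graphs $G\neq K_{D+1}$ with maximum degree $D$. For a graph $G$ and $i\ge 1$, $V_i(G)$ is the set of vertices of $G$ of degree $i$. $\alpha(G)$ is the independence number of $G$. *)

(* Defs.v *)
From HB Require Import structures.
From mathcomp Require Import all_boot all_order all_algebra.
Set Implicit Arguments. Unset Strict Implicit. Unset Printing Implicit Defensive.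
Import Order.TTheory GRing.Theory Num.Theory.

Definition simple_graph (T : finType) (e : rel T) : Prop :=
  symmetric e /\ irreflexive e.

Definition deg (T : finType) (e : rel T) (x : T) : nat := #|[set y | e x y]|.

Definition Vdeg (T : finType) (e : rel T) (i : nat) : {set T} :=
  [set x | deg e x == i].

Definition connected_graph (T : finType) (e : rel T) : Prop :=
  forall x y : T, connect e x y.

Definition max_degree (T : finType) (e : rel T) (D : nat) : Prop :=
  (forall x, deg e x <= D) /\ (exists x, deg e x = D).

Definition is_complete (T : finType) (e : rel T) (n : nat) : Prop :=
  #|T| = n /\ (forall x y : T, x != y -> e x y).

Definition in_GD (D : nat) (T : finType) (e : rel T) : Prop :=
  simple_graph e /\ connected_graph e /\ max_degree e D /\ ~ is_complete e D.+1.

Definition independent (T : finType) (e : rel T) (S : {set T}) : bool :=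
  [forall x in S, forall y in S, ~~ e x y].

Definition alpha (T : finType) (e : rel T) : nat :=
  \max_(S : {set T} | independent e S) #|S|.

(* c_aux D n = c_{D-n}, with c_D = 1/D and c_i = (1 - c_{i+1}) / i. *)
Fixpoint c_aux (D n : nat) : rat :=
  match n with
  | 0 => (D%:R)^-1
  | n'.+1 => (1 - c_aux D n') / ((D - n)%:R)
  end%R.

Definition c (D i : nat) : rat := c_aux D (D - i).

(* Main.v *)
Require Import Defs.
From mathcomp Require Import all_boot all_order all_algebra.
From mathcomp Require Import ring lra zify.
Import Order.TTheory GRing.Theory Num.Theory.
Local Open Scope ring_scope.
Set Implicit Arguments. Unset Strict Implicit. Unset Printing Implicit Defensive.


Lemma c_rec (D j : nat) : (0 < j)%N -> (j < D)%N ->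
  (j%:R * c D j + c D j.+1 = 1 :> rat).
Proof.
move=> j0 jD; rewrite /c.
have -> : (D - j = (D - j.+1).+1)%N by lia.
rewrite /= .
have -> : (D - (D - j.+1).+1 = j)%N by lia.
set x := c_aux D (D - j.+1).
have jn0 : (j%:R : rat) != 0 by rewrite pnatr_eq0 -lt0n.
by field.
Qed.

Lemma c_top (D : nat) : (0 < D)%N -> (D%:R * c D D = 1 :> rat).
Proof.
move=> D0; rewrite /c subnn /=.
have Dn0 : (D%:R : rat) != 0 by rewrite pnatr_eq0 -lt0n.
by rewrite mulfV.
Qed.

Lemma c_bounds_aux (D n : nat) : (n < D)%N ->
  (1 <= ((D - n).+1)%:R * c D (D - n)) /\ ((D - n)%:R * c D (D - n) <= 1 :> rat).
Proof.
elim: n => [|n IH] nD.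
  rewrite subn0.
  have h : (D%:R * c D D = 1 :> rat) by apply: c_top.
  split; last by rewrite h.
  rewrite -addn1 natrD mulrDl h mul1r.
  have : 0 <= c D D by rewrite /c subnn /= invr_ge0 ler0n.
  lra.
have hD : (D - n.+1 < D)%N by lia.
have j0 : (0 < D - n.+1)%N by lia.
have [IH1 IH2] := IH (ltnW nD).
have hr := @c_rec _ _ j0 hD.
have e1 : (D - n = (D - n.+1).+1)%N by lia.
rewrite e1 in IH1 IH2.
set k := (D - n.+1)%N in hr j0 IH1 IH2 *.
have hk1 : (k.+1%:R : rat) = k%:R + 1 by rewrite -addn1 natrD.
have hk2 : (k.+2%:R : rat) = k%:R + 2 by rewrite -addn2 natrD.
rewrite ?hk2 ?hk1 in IH1. rewrite ?hk1 in IH2. rewrite ?hk1.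
set a := c D k in hr *. set b := c D k.+1 in hr IH1 IH2 *.
have kp : (1 : rat) <= k%:R by rewrite ler1n.
split; nra.
Qed.

Lemma c_bounds (D j : nat) : (0 < j)%N -> (j <= D)%N ->
  (1 <= (j.+1)%:R * c D j) /\ (j%:R * c D j <= 1 :> rat).
Proof.
move=> j0 jD.
have -> : j = (D - (D - j))%N by lia.
apply: c_bounds_aux; lia.
Qed.

Definition c0 (D k : nat) : rat := if k == 0%N then 1 else c D k.

Lemma arith_main (x d c1 cM : rat) : 1 <= x -> x * d = c1 ->
  (x+1)*cM + c1 = 1 -> 1 <= (x+3)*c1 -> 0 <= c1 -> cM <= (x+1)*d.
Proof.
move=> xp i r b1 c1p.
set g := (x + 1) * d - cM.
have key : x * (x + 1) * g = x * ((x + 3) * c1 - 1) + c1.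
  have eC : (x+1)*cM = 1 - c1 by lra.
  rewrite /g; transitivity ((x+1)*(x+1)*(x*d) - x*((x+1)*cM)); first ring.
  rewrite i eC; ring.
have gp : 0 <= g.
  have hk : 0 <= x * (x + 1) * g by rewrite key; nra.
  have xx : 0 < x * (x+1) by nra.
  by rewrite pmulr_rge0 in hk.
rewrite /g in gp; lra.
Qed.

Section CFacts.
Variable D : nat.
Hypothesis D0 : (0 < D)%N.

Lemma c0_rec j : (0 < j)%N -> (j < D)%N -> j%:R * c0 D j + c0 D j.+1 = 1.
Proof. move=> j0 jD; rewrite /c0 /= ifN; [exact: c_rec | by rewrite -lt0n]. Qed.

Lemma c0_bnd j : (j <= D)%N -> 1 <= (j.+1)%:R * c0 D j /\ j%:R * c0 D j <= 1 /\ 0 <= c0 D j.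
Proof.
rewrite /c0; case: j => [|j] jD /=; first by rewrite mulr1 mul0r; lra.
have [h1 h2] := @c_bounds D j.+1 isT jD.
split => //; split => //.
have : (0:rat) < j.+2%:R by rewrite ltr0n.
nra.
Qed.

Lemma c0_step j : (j < D)%N -> c0 D j.+1 <= c0 D j.
Proof.
move=> jD.
have [a1 [a2 a3]] := c0_bnd (ltnW jD).
have [b1 [b2 b3]] := c0_bnd jD.
have hj : (j.+1%:R : rat) = j%:R + 1 by rewrite -addn1 natrD.
rewrite hj in a1 b2.
have : (0:rat) <= j%:R by rewrite ler0n.
nra.
Qed.

Lemma c0_anti a b : (a <= b)%N -> (b <= D)%N -> c0 D b <= c0 D a.
Proof.
move=> ab; elim: b ab => [|b IH] ab bD.
  by have -> : a = 0%N by lia.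
case: (ltngtP a b.+1) ab => // [lt _|-> _]; last by [].
apply: le_trans (c0_step bD) _; apply: IH; lia.
Qed.

Lemma c0_clique k : (k < D)%N -> c0 D k.+1 + k%:R * c0 D k <= 1.
Proof.
case: k => [|k] kD.
  rewrite mul0r addr0; have [_ [h _]] := c0_bnd kD; by rewrite mul1r in h.
by rewrite addrC c0_rec.
Qed.

Lemma c0_clique2 m d : (m < d)%N -> (d < D)%N -> c0 D d + m%:R * c0 D m <= 1.
Proof.
move=> md dD.
have h1 := c0_anti md (ltnW dD).
have h2 := c0_clique (ltn_trans md dD).
lra.
Qed.

Definition Dm (m : nat) := c0 D m.-1 - c0 D m.

Lemma Dm_id m : (2 <= m)%N -> (m < D)%N -> (m.-1)%:R * Dm m = c0 D m.+1.
Proof.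
case: m => [|[|m]] //= m2 mD; rewrite /Dm /=.
have r1 := @c0_rec m.+1 isT (ltn_trans (ltnSn _) mD).
have r2 := @c0_rec m.+2 isT mD.
have hj : (m.+2%:R : rat) = m.+1%:R + 1 by rewrite -addn1 natrD.
rewrite hj in r2.
lra.
Qed.

Lemma Dm_step m : (2 <= m)%N -> (m.+1 < D)%N -> Dm m.+1 <= Dm m.
Proof.
move=> m2 mD.
have i1 := Dm_id m2 (ltn_trans (ltnSn _) mD).
have i2 := @Dm_id m.+1 (leqW m2) mD.
have c1 := c0_step mD.
have [_ [_ p]] := c0_bnd (ltnW mD).
have [_ [_ p2]] := c0_bnd mD.
case: m m2 mD i1 i2 c1 p p2 => [|[|m]] //= _ _ i1 i2 c1 p p2.
have hj : (m.+2%:R : rat) = m.+1%:R + 1 by rewrite -addn1 natrD.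
rewrite hj in i2.
have : (1:rat) <= m.+1%:R by rewrite ler1n.
nra.
Qed.

Lemma Dm_anti a b : (2 <= a)%N -> (a <= b)%N -> (b < D)%N -> Dm b <= Dm a.
Proof.
move=> a2; elim: b => [|b IH] ab bD; first by lia.
case: (ltngtP a b.+1) ab => // [lt _|-> _]; last by [].
apply: le_trans (Dm_step _ bD) _; first lia.
apply: IH; lia.
Qed.

Lemma Dm_cc k M : (k.+2 <= M)%N -> (M < D)%N -> Dm M <= (k.+1)%:R^-1 - c0 D k.+1.
Proof.
move=> kM MD.
apply: le_trans (Dm_anti _ kM MD) _ => //.
have i := @Dm_id k.+2 isT (leq_ltn_trans kM MD).
have r := @c0_rec k.+1 isT (leq_ltn_trans _ MD); rewrite /= in i.
have r' : k.+1%:R * c0 D k.+1 + c0 D k.+2 = 1 by apply: r; lia.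
have c1 := @c0_step k.+2 (leq_ltn_trans kM MD).
have kp : (0:rat) < k.+1%:R by rewrite ltr0n.
have -> : (k.+1%:R^-1 - c0 D k.+1) = c0 D k.+2 / k.+1%:R.
  apply: (mulIf (lt0r_neq0 kp)); rewrite mulrBl mulfVK ?lt0r_neq0 // mulVf ?lt0r_neq0 //.
  lra.
rewrite ler_pdivlMr //.
lra.
Qed.

Lemma Dm_main M : (2 <= M)%N -> (M < D)%N -> c0 D M <= M%:R * Dm M.
Proof.
move=> M2 MD.
have i := Dm_id M2 MD.
have r := @c0_rec M (ltnW M2) MD.
have [b1 [_ c1p]] := c0_bnd MD.
case: M M2 MD i r b1 c1p => [|[|m]] //= _ _ i r b1 c1p.
have h1 : (m.+2%:R : rat) = m.+1%:R + 1 by rewrite -addn1 natrD.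
have h2 : (m.+3%:R : rat) = m.+1%:R + 2 by rewrite -addn2 natrD.
have h4 : (m.+4%:R : rat) = m.+1%:R + 3 by rewrite -addn3 natrD.
rewrite h1 in r *; rewrite h4 in b1.
apply: arith_main i r b1 c1p; by rewrite ler1n.
Qed.

End CFacts.


Section Graph.
Variables (T : finType) (e : rel T) (D : nat).
Hypothesis esym : symmetric e.
Hypothesis eirr : irreflexive e.
Hypothesis D0 : (0 < D)%N.
Hypothesis degD : forall x, (#|[set y | e x y]| < D)%N.
Implicit Types (S A I Q : {set T}) (x y z v : T).

Definition Nb (S : {set T}) (x : T) := [set y in S | e x y].
Definition dg (S : {set T}) (x : T) := #|Nb S x|.
Definition CN (S : {set T}) (x : T) := [set y in S | (y == x) || e x y].
Definition ccb (S : {set T}) (x : T) := [forall y in Nb S x, CN S y == CN S x].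
Definition w (S : {set T}) (x : T) : rat := if ccb S x then ((dg S x).+1%:R)^-1 else c0 D (dg S x).
Definition W (S : {set T}) := \sum_(x in S) w S x.
Definition alphaS (S : {set T}) := \max_(I : {set T} | (I \subset S) && independent e I) #|I|.

Lemma inCN S x z : (z \in CN S x) = (z \in S) && ((z == x) || e x z).
Proof. by rewrite /CN in_set. Qed.

Lemma inNb S x z : (z \in Nb S x) = (z \in S) && e x z.
Proof. by rewrite /Nb in_set. Qed.

Lemma dg_lt S x : (dg S x < D)%N.
Proof.
apply: leq_ltn_trans (degD x); apply: subset_leq_card; apply/subsetP => y.
by rewrite !inE => /andP[].
Qed.

Lemma Nb_sub S S' x : S' \subset S -> Nb S' x \subset Nb S x.
Proof. by move=> /subsetP h; apply/subsetP => y; rewrite !inE => /andP[/h -> ->]. Qed.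

Lemma dg_mono S S' x : S' \subset S -> (dg S' x <= dg S x)%N.
Proof. by move=> h; apply: subset_leq_card; apply: Nb_sub. Qed.

Lemma CN_U S x : x \in S -> CN S x = x |: Nb S x.
Proof.
move=> xS; apply/setP => y; rewrite !inE.
by case: (eqVneq y x) => [->|]; rewrite ?xS ?andbT.
Qed.

Lemma card_CN S x : x \in S -> #|CN S x| = (dg S x).+1.
Proof.
move=> xS; rewrite CN_U // cardsU1 /dg inE eirr andbF //.
Qed.

Lemma cc_prop S x y : x \in S -> ccb S x -> y \in CN S x ->
  [/\ y \in S, ccb S y, CN S y = CN S x & dg S y = dg S x].
Proof.
move=> xS /forallP cc; rewrite inE => /andP[yS]; case/orP => [/eqP->|exy].
  by split => //; apply/forallP.
have yN : y \in Nb S x by rewrite inE yS exy.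
have eq1 : CN S y = CN S x by apply/eqP; move: (cc y); rewrite yN.
have eqd : dg S y = dg S x.
  by apply: succn_inj; rewrite -!card_CN // eq1.
split => //; apply/forallP => z; apply/implyP => zN.
have zC : z \in CN S x by rewrite -eq1 inE; move: zN; rewrite inE => /andP[-> ->]; rewrite orbT.
move: zC; rewrite inE => /andP[zS]; case/orP => [/eqP->|exz].
  by rewrite eq1.
have zN' : z \in Nb S x by rewrite inE zS exz.
by move: (cc z); rewrite zN' /= => /eqP->; rewrite eq1.
Qed.

Lemma CN_self S x : x \in S -> x \in CN S x.
Proof. by move=> xS; rewrite inE xS eqxx. Qed.

Lemma CN_sub S x : CN S x \subset S.
Proof. by apply/subsetP => y; rewrite inE => /andP[]. Qed.

Lemma cc_adj S x y z : x \in S -> ccb S x -> y \in CN S x -> z \in CN S x -> y != z -> e y z.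
Proof.
move=> xS cx yC zC yz.
have [yS cy eq _] := cc_prop xS cx yC.
by move: zC; rewrite -eq inE => /andP[_]; rewrite eq_sym (negbTE yz).
Qed.

Lemma Nb_loc S S' x : S' \subset S -> Nb S x \subset S' -> Nb S' x = Nb S x.
Proof.
move=> sub /subsetP h; apply/setP => y; rewrite !inE.
apply/andP/andP => [[yS' ->]|[yS exy]]; first by rewrite (subsetP sub).
by split => //; apply: h; rewrite inE yS exy.
Qed.

Lemma CN_loc S S' x : S' \subset S -> x \in S' -> Nb S x \subset S' -> CN S' x = CN S x.
Proof.
move=> sub xS' h; rewrite !CN_U ?(Nb_loc sub h) //; exact: (subsetP sub).
Qed.

Lemma cc_loc S S' x : S' \subset S -> x \in S' -> Nb S x \subset S' ->
  (forall y, y \in Nb S x -> Nb S y \subset S') -> ccb S' x = ccb S x.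
Proof.
move=> sub xS' h hy; rewrite /ccb (Nb_loc sub h).
apply: eq_forallb => y; case yN: (y \in Nb S x) => //=.
rewrite (CN_loc sub xS' h) (CN_loc sub _ (hy y yN)) //.
by apply: (subsetP h).
Qed.

Lemma w_loc S S' x : S' \subset S -> x \in S' -> Nb S x \subset S' ->
  (forall y, y \in Nb S x -> Nb S y \subset S') -> w S' x = w S x.
Proof.
move=> sub xS' h hy; rewrite /w (cc_loc sub xS' h hy) /dg (Nb_loc sub h) //.
Qed.

Lemma alpha_ge S I : I \subset S -> independent e I -> (#|I| <= alphaS S)%N.
Proof. by move=> h1 h2; apply: (@leq_bigmax_cond _ (fun I => (I \subset S) && independent e I)); rewrite h1 h2. Qed.

Lemma alpha_wit S : exists I, [/\ I \subset S, independent e I & #|I| = alphaS S].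
Proof.
have : (0 < #|(fun I : {set T} => (I \subset S) && independent e I)|)%N.
  apply/card_gt0P; exists set0; rewrite /in_mem /= sub0set /independent.
  by apply/forallP => x; rewrite inE.
case/(eq_bigmax_cond (fun I : {set T} => #|I|)) => I /andP[h1 h2] h.
by exists I; split.
Qed.

Lemma alpha_mono S S' : S' \subset S -> (alphaS S' <= alphaS S)%N.
Proof.
move=> sub; have [I [h1 h2 <-]] := alpha_wit S'.
apply: alpha_ge => //; exact: subset_trans sub.
Qed.

Lemma alpha_add S A y : A \subset S -> y \in A -> Nb S y \subset A ->
  ((alphaS (S :\: A)).+1 <= alphaS S)%N.
Proof.
move=> AS yA hN; have [I [h1 h2 <-]] := alpha_wit (S :\: A).
have yI : y \notin I.
  by apply/negP => /(subsetP h1); rewrite inE yA.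
have -> : (#|I|).+1 = #|y |: I| by rewrite cardsU1 yI.
apply: alpha_ge.
  apply/subsetP => z; rewrite in_setU1 => /orP[/eqP->|]; first exact: (subsetP AS).
  by move/(subsetP h1); rewrite inE => /andP[].
apply/forallP => a; apply/implyP => aI; apply/forallP => b; apply/implyP => bI.
have nadj : forall z, z \in I -> ~~ e y z.
  move=> z zI; apply/negP => eyz.
  have zS : z \in S by move: (subsetP h1 z zI); rewrite inE => /andP[].
  have : z \in A by apply: (subsetP hN); rewrite inE zS eyz.
  by move: (subsetP h1 z zI); rewrite inE => /andP[/negP].
move: aI bI; rewrite !in_setU1 => /orP[/eqP->|aI] /orP[/eqP->|bI].
- by rewrite eirr.
- exact: nadj.
- by rewrite esym; apply: nadj.
- by move/forallP: h2 => /(_ a); rewrite aI => /forallP /(_ b); rewrite bI.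
Qed.


Lemma closed_CN S x : x \in S -> ccb S x -> forall y, y \in S :\: CN S x ->
  Nb S y \subset S :\: CN S x.
Proof.
move=> xS cx y; rewrite inE => /andP[yC yS]; apply/subsetP => z.
rewrite inE => /andP[zS eyz]; rewrite inE zS andbT.
apply/negP => zC.
have [_ _ eq _] := cc_prop xS cx zC.
move/negP: yC; apply; rewrite -eq inE yS esym eyz orbT //.
Qed.

Lemma W_split S A : A \subset S ->
  W S = \sum_(y in A) w S y + \sum_(y in S :\: A) w S y.
Proof. by move=> h; rewrite /W (big_setID A) /= (setIidPr h). Qed.

Lemma W_loc_closed S A : A \subset S ->
  (forall y, y \in S :\: A -> Nb S y \subset S :\: A) ->
  \sum_(y in S :\: A) w S y = W (S :\: A).
Proof.
move=> AS cl; rewrite /W; apply: eq_bigr => y yS.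
have h1 : S :\: A \subset S by exact: subsetDl.
have h3 := cl y yS.
have h4 : forall z, z \in Nb S y -> Nb S z \subset S :\: A.
  by move=> z zN; apply: cl; apply: (subsetP h3).
by rewrite (w_loc h1 yS h3 h4).
Qed.

Lemma case_cc S x : x \in S -> ccb S x -> W S = 1 + W (S :\: CN S x).
Proof.
move=> xS cx.
rewrite (W_split (CN_sub S x)) (W_loc_closed (CN_sub S x) (closed_CN xS cx)).
congr (_ + _).
rewrite (eq_bigr (fun _ => ((dg S x).+1%:R)^-1)); last first.
  by move=> y yC; have [_ cy _ dy] := cc_prop xS cx yC; rewrite /w cy dy.
by rewrite sumr_const card_CN // -[RHS](@mulVf _ ((dg S x).+1%:R)) ?pnatr_eq0 // mulr_natr.
Qed.


Lemma cc_wsum S x : x \in S -> ccb S x -> \sum_(z in CN S x) w S z = 1.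
Proof.
move=> xS cx.
rewrite (eq_bigr (fun _ => ((dg S x).+1%:R)^-1)); last first.
  by move=> y yC; have [_ cy _ dy] := cc_prop xS cx yC; rewrite /w cy dy.
by rewrite sumr_const card_CN // -[RHS](@mulVf _ ((dg S x).+1%:R)) ?pnatr_eq0 // mulr_natr.
Qed.

Lemma c0_dg_anti S S' z : S' \subset S -> c0 D (dg S z) <= c0 D (dg S' z).
Proof. move=> h. have h1 := @dg_mono S S' z h. have h2 := dg_lt S z. exact: (c0_anti D0 h1 (ltnW h2)). Qed.

Lemma clique_sum S S' x : S' \subset S -> x \in S' -> ccb S' x ->
  \sum_(z in CN S' x) c0 D (dg S z) <= c0 D (dg S x) + (dg S' x)%:R * c0 D (dg S' x).
Proof.
move=> sub xS' cx.
rewrite (bigD1 x) ?CN_self //=; apply: lerD => //.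
apply: le_trans (_ : \sum_(z in CN S' x | z != x) c0 D (dg S' x) <= _).
  apply: ler_sum => z /andP[zC _].
  have [_ _ _ dz] := cc_prop xS' cx zC.
  by rewrite -dz; apply: c0_dg_anti.
rewrite (eq_bigl (fun z => z \in CN S' x :\ x)); last by move=> z; rewrite in_setD1 andbC.
have cardP : #|CN S' x :\ x| = dg S' x.
  apply: succn_inj; rewrite -card_CN // (cardsD1 x (CN S' x)) CN_self //.
by rewrite sumr_const cardP mulr_natl.
Qed.

Lemma dg_lt_strict S S' x u : S' \subset S -> u \in Nb S x -> u \notin S' ->
  (dg S' x < dg S x)%N.
Proof.
move=> sub uN uS'; apply: proper_card; rewrite properE Nb_sub //=.
apply/subsetPn; exists u => //; rewrite inE (negbTE uS') //.
Qed.


Lemma loc_del S v u : u \in S :\ v -> ~~ e v u ->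
  Nb S u \subset S :\ v.
Proof.
move=> uS1 nvu; apply/subsetP => t; rewrite inE => /andP[tS eut].
rewrite in_setD1 tS andbT; apply/eqP => tv; move: nvu; rewrite -tv esym eut.
by [].
Qed.

Lemma optB S v y :
  (forall x, x \in S -> ~~ ccb S x) -> v \in S -> y \in S :\ v -> ~~ e v y -> ccb (S :\ v) y ->
  \sum_(z in S) c0 D (dg S z) <= 1 + W (S :\: CN (S :\ v) y).
Proof.
move=> noCC vS yS1 nvy cy.
have S1S : S :\ v \subset S by apply: subD1set.
have QS1 : CN (S :\ v) y \subset S :\ v by apply: CN_sub.
have QS : CN (S :\ v) y \subset S by apply: subset_trans QS1 S1S.
have vS1 : v \notin S :\ v by rewrite in_setD1 eqxx.
have yS : y \in S by apply: (subsetP S1S).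
have [q0 q0Q evq0] : exists2 q0, q0 \in CN (S :\ v) y & e v q0.
  case: (boolP [exists q in CN (S :\ v) y, e v q]) => [/exists_inP //|/exists_inPn nq].
  exfalso; apply: (negP (noCC y yS)).
  apply/forallP => z; apply/implyP => zN.
  have zS1 : z \in S :\ v.
    move: zN; rewrite inE => /andP[zS eyz]; rewrite in_setD1 zS andbT.
    by apply/eqP => zv; move: nvy; rewrite -zv esym eyz.
  have zQ : z \in CN (S :\ v) y.
    by move: zN; rewrite inCN inNb zS1 => /andP[_ ->]; rewrite orbT.
  have [_ _ eqz _] := cc_prop yS1 cy zQ.
  rewrite -(CN_loc S1S zS1 (loc_del zS1 (nq z zQ))) -(CN_loc S1S yS1 (loc_del yS1 nvy)).
  by rewrite eqz.
rewrite (big_setID (CN (S :\ v) y)) /= (setIidPr QS).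
apply: lerD.
  have [q0S1 cq0 eqQ _] := cc_prop yS1 cy q0Q.
  have := clique_sum S1S q0S1 cq0; rewrite eqQ => h; apply: le_trans h _.
  have hlt : (dg (S :\ v) q0 < dg S q0)%N.
    apply: (@dg_lt_strict S (S :\ v) q0 v) => //.
    by rewrite inNb vS esym evq0.
  have := c0_clique2 D0 hlt (dg_lt S q0).
  by [].
set Q := CN (S :\ v) y in q0Q QS1 QS *.
set S2 := S :\: Q.
have S2S : S2 \subset S by apply: subsetDl.
have vQ : v \notin Q by apply/negP => /(subsetP QS1); rewrite (negbTE vS1).
have vS2 : v \in S2 by rewrite inE vQ vS.
have Qcl : forall q z, q \in Q -> z \in S -> e q z -> z != v -> z \in Q.
  move=> q z qQ zS eqz zv; have [_ _ eqC _] := cc_prop yS1 cy qQ.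
  rewrite -/Q in eqC; rewrite -eqC inE in_setD1 zv zS eqz orbT //.
have NbS2 : forall z, z \in S2 -> z != v -> Nb S z \subset S2.
  move=> z; rewrite inE => /andP[zQ zS] zv; apply/subsetP => t; rewrite inE => /andP[tS ezt].
  rewrite inE tS andbT; apply/negP => tQ.
  by move/negP: zQ; apply; apply: (Qcl t) => //; rewrite esym.
have X : forall z, z \in S2 -> ccb S2 z -> z \in CN S2 v.
  move=> z zS2 cz; case: (boolP (z \in CN S2 v)) => // nzC; exfalso.
  move: nzC; rewrite inE zS2 /= negb_or => /andP[zv nvz].
  have zS : z \in S by apply: (subsetP S2S).
  apply: (negP (noCC z zS)).
  rewrite -(cc_loc S2S zS2 (NbS2 z zS2 zv)) //.
  move=> u uN; have uS2 : u \in S2 by apply: (subsetP (NbS2 z zS2 zv)).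
  apply: NbS2 => //; apply/eqP => uv; move: uN nvz; rewrite uv inNb => /andP[_ ezv].
  by rewrite esym ezv.
have pw : forall z, z \in S2 -> ~~ ccb S2 z -> c0 D (dg S z) <= w S2 z.
  by move=> z _ ncz; rewrite /w (negbTE ncz); apply: c0_dg_anti.
rewrite /W; case: (boolP (ccb S2 v)) => cv.
  have KS2 : CN S2 v \subset S2 by apply: CN_sub.
  rewrite (big_setID (CN S2 v)) /= (setIidPr KS2).
  rewrite [X in _ <= X](big_setID (CN S2 v)) /= (setIidPr KS2) (cc_wsum vS2 cv).
  apply: lerD.
    apply: le_trans (clique_sum S2S vS2 cv) _.
    have hlt : (dg S2 v < dg S v)%N.
      apply: (@dg_lt_strict S S2 v q0) => //.
        by rewrite inNb evq0 andbT; apply: (subsetP QS).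
      by rewrite inE q0Q.
    by have := c0_clique2 D0 hlt (dg_lt S v).
  apply: ler_sum => z; rewrite inE => /andP[nzK zS2]; apply: pw => //.
  by apply/negP => /(X z zS2); rewrite (negbTE nzK).
apply: ler_sum => z zS2; apply: pw => //; apply/negP => cz.
move: (X z zS2 cz); rewrite inE zS2 /= => /orP[/eqP zv|evz].
  by move: cv; rewrite -zv cz.
have vC : v \in CN S2 z by rewrite inE vS2 esym evz orbT.
by have [_ cv' _ _] := cc_prop zS2 cz vC; move: cv; rewrite cv'.
Qed.


Lemma dg_del S v u : v \in S -> u \in Nb S v -> dg S u = (dg (S :\ v) u).+1.
Proof.
move=> vS uN; rewrite /dg.
have -> : Nb S u = v |: Nb (S :\ v) u.
  apply/setP => t; rewrite in_setU1 !inNb in_setD1.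
  case: (eqVneq t v) => [->|] //=.
  by move: uN; rewrite inNb vS esym => /andP[_ ->].
by rewrite cardsU1 inNb in_setD1 eqxx.
Qed.

Lemma cc_empty S x : dg S x = 0%N -> ccb S x.
Proof.
move=> /eqP; rewrite cards_eq0 => /eqP h; apply/forallP => y; rewrite h inE //.
Qed.

Lemma optA S v : (forall x, x \in S -> ~~ ccb S x) -> v \in S ->
  (forall z, z \in S -> (dg S z <= dg S v)%N) ->
  (forall y, y \in S :\ v -> ~~ e v y -> ~~ ccb (S :\ v) y) ->
  \sum_(z in S) c0 D (dg S z) <= W (S :\ v).
Proof.
move=> noCC vS vmax HA.
have S1S : S :\ v \subset S by apply: subD1set.
have spec : forall u, u \in Nb S v -> ccb (S :\ v) u -> (dg (S :\ v) u).+1 = dg S v -> False.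
  move=> u uN cu hd.
  have uS1 : u \in S :\ v.
    move: uN; rewrite inNb in_setD1 => /andP[-> evu]; rewrite andbT.
    by apply/eqP => uv; move: evu; rewrite uv eirr.
  have QN : CN (S :\ v) u \subset Nb S v.
    apply/subsetP => q qQ; have [qS1 cq _ _] := cc_prop uS1 cu qQ.
    rewrite inNb (subsetP S1S _ qS1) /=.
    by apply/negP => /negP nvq; move: (HA q qS1 nvq); rewrite cq.
  have QeqN : CN (S :\ v) u = Nb S v.
    apply/eqP; rewrite eqEcard QN /= card_CN // hd //.
  apply: (negP (noCC v vS)); apply/forallP => y; apply/implyP => yN.
  have yQ : y \in CN (S :\ v) u by rewrite QeqN.
  have [yS1 _ eqy _] := cc_prop uS1 cu yQ.
  apply/eqP/setP => t; rewrite !inCN.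
  case: (eqVneq t v) => [->|tv].
    by rewrite vS /=; move: yN; rewrite inNb => /andP[_ evy]; rewrite esym evy orbT.
  rewrite /=.
  have := congr1 (fun A => t \in A) eqy; rewrite /= !inCN in_setD1 tv /= => h.
  have := congr1 (fun A => t \in A) QeqN; rewrite /= inCN inNb in_setD1 tv /= => h2.
  case tS: (t \in S) => //=; rewrite tS /= in h h2.
  by rewrite h h2.
have M1 : (0 < dg S v)%N.
  rewrite lt0n; apply/negP => /eqP h; move: (noCC v vS); rewrite cc_empty //.
have [u0 u0N] : exists u, u \in Nb S v.
  by apply/set0Pn; rewrite -card_gt0.
have MD : (dg S v < D)%N by apply: dg_lt.
have M2 : (2 <= dg S v)%N.
  case: (ltnP 1 (dg S v)) => // hle.
  have d0 : dg (S :\ v) u0 = 0%N.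
    have u0S : u0 \in S by move: u0N; rewrite inNb => /andP[].
    by move: (vmax u0 u0S); rewrite (dg_del vS u0N); lia.
  exfalso; apply: (spec u0 u0N (cc_empty d0)); rewrite d0; lia.
set M := dg S v in M1 M2 MD spec vmax *.
have pw : forall z, z \in S :\ v ->
    c0 D (dg S z) + (if e v z then Dm D M else 0) <= w (S :\ v) z.
  move=> z zS1; have zS : z \in S by apply: (subsetP S1S).
  case: (boolP (e v z)) => evz; last first.
    rewrite addr0 /w (negbTE (HA z zS1 evz)) /dg (Nb_loc S1S (loc_del zS1 evz)) //.
  have zN : z \in Nb S v by rewrite inNb zS evz.
  have dz := dg_del vS zN.
  have zle : (dg S z <= M)%N by apply: vmax.
  rewrite /w dz; case: (boolP (ccb (S :\ v) z)) => cz.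
    case: (ltngtP (dg (S :\ v) z).+1 M) => [lt||eq].
    - have := Dm_cc D0 lt MD; move=> h; set a := (_.+1%:R^-1) in h *; lra.
    - by rewrite -dz; lia.
    - by exfalso; apply: (spec z zN cz eq).
  have k1 : (0 < dg (S :\ v) z)%N.
    by rewrite lt0n; apply/negP => /eqP /cc_empty; rewrite (negbTE cz).
  have zle' : ((dg (S :\ v) z).+1 <= M)%N by rewrite -dz.
  have := Dm_anti D0 (k1 : (2 <= (dg (S :\ v) z).+1)%N) zle' MD.
  rewrite /Dm /= => h; lra.
rewrite (big_setD1 v vS) /W.
apply: le_trans (ler_sum _ pw); rewrite big_split /= addrC lerD2l.
have -> : \sum_(z in S :\ v) (if e v z then Dm D M else 0) = \sum_(z in Nb S v) Dm D M.
  rewrite big_mkcond [RHS]big_mkcond; apply: eq_bigr => z _.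
  rewrite inNb in_setD1; case: (eqVneq z v) => [->|zv] /=; first by rewrite eirr; case: (_ \in S).
  by case: (z \in S).
rewrite sumr_const -/(dg S v) -/M -mulr_natl.
exact: Dm_main M2 MD.
Qed.


Lemma card_rem S A x : x \in S -> x \in A -> (#|S :\: A| < #|S|)%N.
Proof.
move=> xS xA; apply: proper_card; rewrite properE subsetDl /=.
by apply/subsetPn; exists x => //; rewrite inE xA.
Qed.

Lemma main S : W S <= (alphaS S)%:R.
Proof.
elim: {S}_.+1 {-2}S (ltnSn #|S|) => // n IH S Sn.
case: (set_0Vmem S) => [->|[x0 x0S]].
  by rewrite /W big_set0 ler0n.
have step : forall (A : {set T}) (y : T), A \subset S -> y \in A -> Nb S y \subset A ->
    W (S :\: A) <= (alphaS (S :\: A))%:R /\ (1 + (alphaS (S :\: A))%:R : rat) <= (alphaS S)%:R.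
  move=> A y AS yA hN; split.
    apply: (IH (S :\: A)); have := card_rem (subsetP AS y yA) yA; lia.
  have := alpha_add AS yA hN; rewrite -(ler_nat rat) -addn1 natrD addrC //.
case: (boolP [exists x in S, ccb S x]) => [/exists_inP [x xS cx] | /exists_inPn noCC].
  rewrite (case_cc xS cx).
  have hN : Nb S x \subset CN S x by rewrite CN_U // subsetUr.
  have [h1 h2] := step (CN S x) x (CN_sub S x) (CN_self xS) hN.
  by apply: le_trans h2; rewrite lerD2l.
have WS : W S = \sum_(z in S) c0 D (dg S z).
  by apply: eq_bigr => z zS; rewrite /w (negbTE (noCC z zS)).
rewrite WS.
case: (arg_maxnP (dg S) x0S) => v vS vmax.
case: (boolP [exists y in S :\ v, ~~ e v y && ccb (S :\ v) y]) =>
    [/exists_inP [y yS1 /andP[nvy cy]] | /exists_inPn HA].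
  have QS : CN (S :\ v) y \subset S by apply: subset_trans (CN_sub _ _) (subD1set S v).
  have hN : Nb S y \subset CN (S :\ v) y.
    apply/subsetP => t; rewrite inNb inCN => /andP[tS eyt].
    rewrite eyt orbT andbT in_setD1 tS andbT.
    by apply/eqP => tv; move: nvy; rewrite -tv esym eyt.
  have [h1 h2] := step _ y QS (CN_self yS1) hN.
  apply: le_trans (optB noCC vS yS1 nvy cy) _.
  by apply: le_trans h2; rewrite lerD2l.
have HA' : forall y, y \in S :\ v -> ~~ e v y -> ~~ ccb (S :\ v) y.
  by move=> y yS1 nvy; move: (HA y yS1); rewrite nvy.
apply: le_trans (optA noCC vS vmax HA') _.
apply: le_trans (IH (S :\ v) _) _.
  have := card_rem vS (set11 v); rewrite -/(S :\ v) => h; lia.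
by rewrite ler_nat; apply: alpha_mono; apply: subD1set.
Qed.

End Graph.


Theorem theorem4 (D D' : nat) (T : finType) (e : rel T) :
  (4 <= D)%N -> (3 <= D')%N -> (D' < D)%N -> in_GD D' e ->
  \sum_(1 <= i < D'.+1) c D i * (#|Vdeg e i|)%:R <= (alpha e)%:R.
Proof.
move=> D4 D3 DD [[esym eirr] [conn [[dmax [z0 dz0]] ncomp]]].
have D0 : (0 < D)%N by lia.
have degD : forall x, (#|[set y | e x y]| < D)%N.
  by move=> x; apply: leq_ltn_trans (dmax x) DD.
have Nbdeg : forall x, dg e [set: T] x = deg e x.
  by move=> x; rewrite /dg /deg /Nb; apply: eq_card => y; rewrite !inE.
have noCC : forall x, ~~ ccb e [set: T] x.
  move=> x; apply/negP => cx.
  have xT : x \in [set: T] by rewrite inE.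
  have allC : forall y, y \in CN e [set: T] x.
    move=> y; have cl : closed e (CN e [set: T] x).
      move=> a b eab; apply/idP/idP => h.
        have [_ _ eq _] := cc_prop eirr xT cx h.
        by rewrite -eq inCN inE eab orbT.
      have [_ _ eq _] := cc_prop eirr xT cx h.
      by rewrite -eq inCN inE esym eab orbT.
    by rewrite -(closed_connect cl (conn x y)) (CN_self e xT).
  apply: ncomp; split.
    have -> : #|T| = #|CN e [set: T] x|.
      rewrite -cardsT; apply: eq_card => y; by rewrite inE allC.
    rewrite (card_CN eirr) //; congr _.+1.
    have [_ _ _ dz] := cc_prop eirr xT cx (allC z0).
    by rewrite -dz Nbdeg.
  by move=> a b ab; apply: (cc_adj eirr xT cx (allC a) (allC b) ab).
have degpos : forall x, (1 <= deg e x)%N.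
  move=> x; rewrite lt0n; apply/negP => /eqP h; move: (noCC x).
  by rewrite cc_empty // Nbdeg h.
have main' := main esym eirr D0 degD [set: T].
have -> : alpha e = alphaS e [set: T].
  by rewrite /alpha /alphaS; apply: eq_bigl => I; rewrite subsetT.
apply: le_trans main'.
have -> : W e D [set: T] = \sum_x c D (deg e x).
  rewrite /W; apply: eq_big => [x|x _]; first by rewrite inE.
  rewrite /w (negbTE (noCC x)) Nbdeg /c0.
  by have := degpos x; case: (deg e x).
rewrite (eq_bigr (fun i => \sum_x (if deg e x == i then c D i else 0))); last first.
  move=> i _; rewrite -big_mkcond /= sumr_const mulr_natr; congr (_ *+ _).
  by apply: eq_card => x; rewrite !inE.
rewrite exchange_big /=; apply: ler_sum => x _.
have dI : deg e x \in index_iota 1 D'.+1 by rewrite mem_index_iota degpos ltnS dmax.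
rewrite (bigD1_seq (deg e x)) ?iota_uniq //= eqxx big1 ?addr0 //.
by move=> i /negbTE; rewrite eq_sym => ->.
Qed.
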